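(* Let $\rho$ be a nonlinearity, $V_{\mathrm{in}}$ a nonempty finite set and $D\in\mathbb{N}$. The binary relation of $\rho$-isomorphism is an equivalence relation on both $\mathscr{N}^{V_{\mathrm{in}},D}_{\mathrm{G}}$ and $\mathscr{N}^{V_{\mathrm{in}},D}_{\mathrm{L}}$, and if $\mathcal{N}$ is $\rho$-isomorphic to $\mathcal{M}$, then $R_{\mathcal{N}}=R_{\mathcal{M}}$.
   Context: A nonlinearity is a continuous $\rho:\mathbb{R}\to\mathbb{R}$ not of the form $t\mapsto at+b$. GFNN with $D$-dim output: $\mathcal{N}=(V,E,V_{\mathrm{in}},V_{\mathrm{out}},\Omega,\Theta,\Lambda)$, $(V,E)$ finite loopless DAG, $V_{\mathrm{in}}$ the parentless nodes, $V_{\mathrm{out}}\subset V\setminus V_{\mathrm{in}}$, nonzero real weights $\omega_{\tilde vv}$ on edges $(v,\tilde v)$, real biases on non-input nodes, real output scalars $\lambda^{(r)},\lambda^{(r)}_w$. $\mathrm{anc}(S)$: nodes with a directed path (length $\ge0$) into $S$. $\mathrm{lv}=0$ on parentless nodes, else $1+$max of parents; LFNN: $\mathrm{lv}(\tilde v)=\mathrm{lv}(v)+1$ on edges. $R_u(t)=t_u$ on inputs, $R_u(t)=\rho(\sum_{v\in\mathrm{par}(u)}\omega_{uv}R_v(t)+\theta_u)$; $R_{\mathcal{N}}=(\lambda^{(r)}+\sum_w\lambda^{(r)}_wR_w)_r$. Non-degenerate: $V\setminus V_{\mathrm{in}}\subset\mathrm{anc}(V_{\mathrm{out}})$ and each output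 node has some nonzero $\lambda^{(r)}_w$. Affine symmetry: $(\zeta,\{(\alpha_s,\beta_s,\gamma_s)\}_{s\in\mathcal{I}})$, $\mathcal{I}$ nonempty finite, $\sum_s\alpha_s\rho(\beta_st+\gamma_s)=\zeta$ $\forall t$, no proper $\mathcal{I}'$ with $\{\rho(\beta_s\cdot+\gamma_s)\}_{\mathcal{I}'}\cup\{\mathbf1\}$ linearly dependent. Reducible: some nonempty $U$ with common parent set $P$, nonzero $\kappa_v,\beta_u$ with $\omega_{uv}=\beta_u\kappa_v$, and $\zeta$, nonzero $\alpha_u$ making $(\zeta,\{(\alpha_u,\beta_u,\theta_u)\}_{u\in U})$ an affine symmetry. Regular = irreducible + non-degenerate. $\mathscr{N}^{V_{\mathrm{in}},D}_{\mathrm{G}}$ ($\mathscr{N}^{V_{\mathrm{in}},D}_{\mathrm{L}}$) = regular GFNNs (LFNNs) with $D$-dim output and input set $V_{\mathrm{in}}$. $\rho$-modification of an irreducible $\mathcal{N}$: $A,B\subset V\setminus V_{\mathrm{in}}$ disjoint, $A\ne\varnothing$, common parent set $P$, $W=\{w:\mathrm{par}(w)\cap A\ne\varnothing\}$; (i) affine symmetry $(\zeta,\{(\alpha_u,\beta_u,\theta_u)\}_{u\in A\cup B}\cup\{(\alpha'_p,\beta'_p,\gamma'_p)\}_{p=1}^n)$, $n\ge1$; (ii) nonzero $\kappa_v$ with $\omega_{uv}=\beta_u\kappa_v$; (iii) $A\subset\mathrm{par}(w)$, nonzero $\nu_w$ with $\omega_{wu}=\nu_w\alpha_u$ ($w\in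 W,u\in A$); (iv) $A\cap V_{\mathrm{out}}=\varnothing$ or $A\subset V_{\mathrm{out}}$ with reals $\mu_r$, $\lambda^{(r)}_u=\mu_r\alpha_u$ ($u\in A$). Delete $A$ and incident edges; add $C=\{u'_1,\dots,u'_n\}$ with edges $(v,u'_p)$ of weight $\beta'_p\kappa_v$, bias $\gamma'_p$, edges $(u'_p,w)$ of weight $-\alpha'_p\nu_w$; $\theta_w\mapsto\theta_w+\zeta\nu_w$; for $w\in W,u\in B$ add edge of weight $-\alpha_u\nu_w$ if absent, else $\omega_{wu}\mapsto\omega_{wu}-\alpha_u\nu_w$, deleting it if $0$. If $A\subset V_{\mathrm{out}}$: $\lambda^{(r)}\mapsto\lambda^{(r)}+\zeta\mu_r$, $\lambda^{(r)}_{u'_p}=-\alpha'_p\mu_r$, for $u\in B$ $\lambda^{(r)}_u$ ($0$ if $u\notin V_{\mathrm{out}}$) $\mapsto\lambda^{(r)}_u-\alpha_u\mu_r$, output set $(V_{\mathrm{out}}\setminus(A\cup B))\cup C\cup\{u\in B:\text{some new }\lambda^{(r)}_u\ne0\}$; else outputs unchanged. Regular GFNNs $\mathcal{N},\mathcal{M}$ (same $D$, same inputs) are $\rho$-isomorphic if there are regular GFNNs $\mathcal{N}_1=\mathcal{N},\dots,\mathcal{N}_n=\mathcal{M}$ ($n\ge1$) with $D$-dim output and the same input set, each $\mathcal{N}_{j+1}$ a $\rho$-modification of $\mathcal{N}_j$. *)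

(* Defs.v *)
From HB Require Import structures.
From mathcomp Require Import all_boot all_order all_algebra.
From mathcomp Require Import finmap.
From mathcomp Require Import reals topology normedtype.

Set Implicit Arguments.
Unset Strict Implicit.
Unset Printing Implicit Defensive.

Import Order.TTheory GRing.Theory Num.Theory.
Import numFieldNormedType.Exports.
Local Open Scope fset_scope.
Local Open Scope ring_scope.

(*  - [weight N u v] is the weight omega_{uv} of the edge (v,u); the edge    *)
(*    set is exactly {(v,u) | weight N u v != 0} (weights on edges are       *)
(*    nonzero, so this is a bijective encoding of (E, Omega));               *)
(*  - biases are 0 outside non-input nodes, output scalars lam r w are 0     *)
(*    for w outside the output set (junk-free, canonical representation).    *)

Section Defs.
Variable R : realType.

Definition nonlinearity (rho : R -> R) : Prop :=
  continuous rho /\ ~ (exists a b : R, forall t, rho t = a * t + b).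

Record GFNN (D : nat) := MkGFNN {
  nodes : {fset nat};
  ins : {fset nat};
  outs : {fset nat};
  weight : nat -> nat -> R;
  bias : nat -> R;
  lam0 : 'I_D -> R;
  lam : 'I_D -> nat -> R
}.

Variable D : nat.
Implicit Types N M : GFNN D.

Definition edgeb N (v u : nat) : bool :=
  [&& v \in nodes N, u \in nodes N & weight N u v != 0].

Definition parentless N (u : nat) : bool := ~~ has (fun v => edgeb N v u) (nodes N).

Definition anc N (S : {fset nat}) (v : nat) : Prop :=
  v \in nodes N /\ exists p : seq nat, path (edgeb N) v p /\ last v p \in S.

Definition acyclic N : Prop :=
  forall v (p : seq nat), path (edgeb N) v p -> p != [::] -> last v p != v.

Definition wf_GFNN N : Prop :=
  acyclic N /\
  (forall u, u \in ins N <-> (u \in nodes N /\ parentless N u)) /\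
  (forall u, u \in outs N -> u \in nodes N /\ u \notin ins N) /\
  (forall u v, weight N u v != 0 -> u \in nodes N /\ v \in nodes N) /\
  (forall u, bias N u != 0 -> u \in nodes N /\ u \notin ins N) /\
  (forall r w, lam N r w != 0 -> w \in outs N).

Fixpoint lvk N (k : nat) (u : nat) : nat :=
  match k with
  | 0 => 0%N
  | k'.+1 => if parentless N u then 0%N
             else (\max_(v <- nodes N | edgeb N v u) lvk N k' v).+1
  end.
Definition lv N (u : nat) : nat := lvk N #|` nodes N| u.

Definition layered N : Prop := forall v u, edgeb N v u -> lv N u = (lv N v).+1.

(* realization; inputs t : nat -> R (only values on the input set matter) *)
Fixpoint real_node (rho : R -> R) N (t : nat -> R) (k : nat) (u : nat) : R :=
  if u \in ins N then t u else
  match k with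
  | 0 => 0
  | k'.+1 => rho (\sum_(v <- nodes N) weight N u v * real_node rho N t k' v
                  + bias N u)
  end.

Definition realization (rho : R -> R) N (t : nat -> R) : 'I_D -> R :=
  fun r => lam0 N r + \sum_(w <- outs N) lam N r w * real_node rho N t #|` nodes N| w.

Definition lin_dep_with_one (I : finType) (P : {set I}) (f : I -> R -> R) : Prop :=
  exists (c : I -> R) (c0 : R),
    (c0 != 0 \/ exists s, (s \in P) && (c s != 0)) /\
    (forall t, c0 + \sum_(s in P) c s * f s t = 0).

Definition affine_symmetry (rho : R -> R) (I : finType) (zeta : R)
    (alpha beta gamma : I -> R) : Prop :=
  [/\ (0 < #|I|)%N,
      (forall t, \sum_(s : I) alpha s * rho (beta s * t + gamma s) = zeta) &
      (forall P : {set I}, P \proper setT ->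
          ~ lin_dep_with_one P (fun s t => rho (beta s * t + gamma s)))].

Definition reducible (rho : R -> R) N : Prop :=
  exists (U P : {fset nat}) (kappa beta alpha : nat -> R) (zeta : R),
    U != fset0 /\
    (forall u, u \in U -> u \in nodes N /\ u \notin ins N) /\
    (forall u v, u \in U -> edgeb N v u = (v \in P)) /\
    (forall v, v \in P -> kappa v != 0) /\
    (forall u, u \in U -> beta u != 0 /\ alpha u != 0) /\
    (forall u v, u \in U -> v \in P -> weight N u v = beta u * kappa v) /\
    affine_symmetry rho zeta (fun u : U => alpha (val u))
          (fun u : U => beta (val u)) (fun u : U => bias N (val u)).

Definition irreducible (rho : R -> R) N : Prop := ~ reducible rho N.

Definition non_degenerate N : Prop :=
  (forall u, u \in nodes N -> u \notin ins N -> anc N (outs N) u) /\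
  (forall w, w \in outs N -> exists r, lam N r w != 0).

Definition regularG (rho : R -> R) (Vin : {fset nat}) N : Prop :=
  [/\ wf_GFNN N, ins N = Vin, irreducible rho N & non_degenerate N].

Definition regularL (rho : R -> R) (Vin : {fset nat}) N : Prop :=
  regularG rho Vin N /\ layered N.

Definition rho_modification (rho : R -> R) N N' : Prop :=
  wf_GFNN N /\ irreducible rho N /\
  exists (A B P : {fset nat}) (n : nat) (c : 'I_n -> nat)
         (zeta : R) (alpha beta : nat -> R) (alpha' beta' gamma' : 'I_n -> R)
         (kappa nu : nat -> R),
  let inC x := [exists p, c p == x] in
  let inW w := (w \in nodes N) && has (fun a => edgeb N a w) A in
   (A != fset0 /\ [disjoint A & B] /\
    (forall u, u \in A `|` B -> u \in nodes N /\ u \notin ins N) /\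
    (forall u v, u \in A `|` B -> edgeb N v u = (v \in P))) /\
   ((0 < n)%N /\
    affine_symmetry rho zeta
     (fun s : (A `|` B) + 'I_n => match s with inl u => alpha (val u) | inr p => alpha' p end)
     (fun s : (A `|` B) + 'I_n => match s with inl u => beta (val u) | inr p => beta' p end)
     (fun s : (A `|` B) + 'I_n => match s with inl u => bias N (val u) | inr p => gamma' p end)) /\
   ((forall v, v \in P -> kappa v != 0) /\
    (forall u v, u \in A `|` B -> v \in P -> weight N u v = beta u * kappa v)) /\
   ((forall w, inW w -> nu w != 0 /\ forall u, u \in A -> edgeb N u w) /\
    (forall w u, inW w -> u \in A -> weight N w u = nu w * alpha u)) /\
   (injective c /\ (forall p, c p \notin nodes N `\` A)) /\
   (* added edges carry nonzero weights (as required of a GFNN) *)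
   ((forall p, beta' p != 0) /\
    (forall p w, inW w -> alpha' p != 0) /\
    (forall w u, inW w -> u \in B -> weight N w u = 0 -> alpha u != 0)) /\
   (ins N' = ins N /\
    (forall x, (x \in nodes N') = ((x \in nodes N) && (x \notin A)) || inC x) /\
    (forall p v, weight N' (c p) v = if v \in P then beta' p * kappa v else 0) /\
    (forall p u, ~~ inC u -> weight N' u (c p) = if inW u then - (alpha' p * nu u) else 0) /\
    (forall u v, ~~ inC u -> ~~ inC v ->
       weight N' u v = if (u \in A) || (v \in A) then 0
                       else if inW u && (v \in B) then weight N u v - alpha v * nu u
                       else weight N u v) /\
    (forall p, bias N' (c p) = gamma' p) /\
    (forall x, ~~ inC x -> bias N' x = if x \in A then 0
                                    else if inW x then bias N x + zeta * nu x
                                    else bias N x)) /\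
   (([disjoint A & outs N] /\ outs N' = outs N /\ lam0 N' = lam0 N /\ lam N' = lam N)
    \/
    exists mu : 'I_D -> R,
      (A `<=` outs N)%fset /\
      (forall r u, u \in A -> lam N r u = mu r * alpha u) /\
      (forall r, lam0 N' r = lam0 N r + zeta * mu r) /\
      (forall r p, lam N' r (c p) = - (alpha' p * mu r)) /\
      (forall r x, ~~ inC x -> lam N' r x = if x \in A then 0
                                         else if x \in B then lam N r x - alpha x * mu r
                                         else lam N r x) /\
      (forall x, (x \in outs N') =
         [|| inC x, (x \in outs N) && (x \notin A `|` B)
           | (x \in B) && [exists r, lam N' r x != 0]])).

Inductive rho_iso (rho : R -> R) (Vin : {fset nat}) : GFNN D -> GFNN D -> Prop :=
| rho_iso_refl N : regularG rho Vin N -> rho_iso rho Vin N N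
| rho_iso_step N N' M : regularG rho Vin N -> rho_modification rho N N' ->
    rho_iso rho Vin N' M -> rho_iso rho Vin N M.

Definition equivalence_on (T : Type) (S : T -> Prop) (rel : T -> T -> Prop) : Prop :=
  [/\ (forall x, S x -> rel x x),
      (forall x y, S x -> S y -> rel x y -> rel y x) &
      (forall x y z, S x -> S y -> S z -> rel x y -> rel y z -> rel x z)].

End Defs.

(* Main.v *)
Require Import Defs.
From HB Require Import structures.
From mathcomp Require Import all_boot all_order all_algebra.
From mathcomp Require Import finmap.
From mathcomp Require Import reals topology normedtype.
From mathcomp Require Import boolp ring zify.

Set Implicit Arguments.
Unset Strict Implicit.
Unset Printing Implicit Defensive.
Import Order.TTheory GRing.Theory Num.Theory.
Local Open Scope fset_scope.
Local Open Scope ring_scope.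


Section Real.
Variable R : realType.
Variable D : nat.
Variable rho : R -> R.
Implicit Types N M : GFNN R D.

Definition wfw N := forall u v, weight N u v != 0 -> u \in nodes N /\ v \in nodes N.

Definition phi N (t : nat -> R) (h : nat -> R) (u : nat) : R :=
  if u \in ins N then t u else rho (\sum_(v <- nodes N) weight N u v * h v + bias N u).

Definition g0 N (t : nat -> R) (u : nat) : R := if u \in ins N then t u else 0.

Lemma real_node_iter N t k u : real_node rho N t k u = iter k (phi N t) (g0 N t) u.
Proof.
elim: k u => [|k IH] u /=; first by rewrite /g0; case: ifP.
rewrite /phi; case: ifP => // _; congr rho; congr (_ + _).
by apply: eq_bigr => v _; rewrite IH.
Qed.

Definition reachk N k v u := exists p, size p = k /\ path (edgeb N) v p /\ last v p = u.

Lemma indep N t (hw : wfw N) k : forall u h h', (forall v, reachk N k v u -> h v = h' v) ->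
  iter k (phi N t) h u = iter k (phi N t) h' u.
Proof.
elim: k => [|k IH] u h h' H /=.
  by apply: H; exists [::].
rewrite /phi; case: ifP => // _; congr rho; congr (_ + _).
apply: eq_bigr => v _.
have [->|nz] := eqVneq (weight N u v) 0; first by rewrite !mul0r.
congr (_ * _); apply: IH => v' [p [sp [pp lp]]]; apply: H.
have [uN vN] := hw _ _ nz.
exists (rcons p u); rewrite size_rcons sp last_rcons rcons_path pp lp; split => //; split => //.
by rewrite /edgeb vN uN nz.
Qed.

Lemma path_nodes N v p : path (edgeb N) v p -> last v p \in nodes N -> all (fun x => x \in nodes N) (v :: p).
Proof.
elim: p v => [|x p IH] v /=; first by rewrite andbT.
move=> /andP[e pp] l; have := IH _ pp l => /= ->; rewrite andbT.
by case/and3P: e.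
Qed.

Lemma path_uniq N v p : acyclic N -> path (edgeb N) v p -> uniq (v :: p).
Proof.
move=> ac; elim: p v => [|x p IH] v //= /andP[e pp].
have := IH _ pp => /= ->; rewrite andbT.
apply/negP => vin.
have vin' : v \in x :: p by [].
have [p1 [p2 Hs]] : exists p1 p2, x :: p = p1 ++ v :: p2.
  by move: vin'; case/splitPr => p1 p2; exists p1, p2.
have : path (edgeb N) v (x :: p) by rewrite /= e pp.
rewrite Hs cat_path => /andP[pp1 /= /andP[el _]].
have := ac v (rcons p1 v); rewrite rcons_path pp1 el last_rcons eqxx => /(_ isT) H.
have : rcons p1 v != [::] by case: (p1) {Hs pp1 el}.
move=> /H; done.
Qed.

Lemma no_long N v u : acyclic N -> reachk N #|` nodes N| v u -> u \in nodes N -> False.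
Proof.
move=> ac [p [sp [pp lp]]] uN.
have al : all (fun x => x \in nodes N) (v :: p) by apply: path_nodes => //; rewrite lp.
have un := path_uniq ac pp.
have := uniq_leq_size un (fun x xin => (allP al) x xin).
by rewrite /= sp ltnn.
Qed.

Definition F N t := real_node rho N t #|` nodes N|.

Lemma phi_congr N t h h' : (forall v, v \in nodes N -> h v = h' v) -> forall u, phi N t h u = phi N t h' u.
Proof.
move=> H u; rewrite /phi; case: ifP => // _; congr rho; congr (_ + _).
by rewrite big_seq_cond [RHS]big_seq_cond; apply: eq_bigr => v /andP[vN _]; rewrite H.
Qed.

Lemma F_fix N t : acyclic N -> wfw N -> forall u, u \in nodes N -> F N t u = phi N t (F N t) u.
Proof.
move=> ac hw u uN.
rewrite (@phi_congr N t _ (iter #|` nodes N| (phi N t) (g0 N t))); last by move=> v _; rewrite /F real_node_iter.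
rewrite /F real_node_iter.
have -> : phi N t (iter #|` nodes N| (phi N t) (g0 N t)) u = iter #|` nodes N| (phi N t) (phi N t (g0 N t)) u.
  by rewrite -iterSr.
by apply: indep => // v /no_long; move=> /(_ ac uN).
Qed.

Lemma F_unique N t f : acyclic N -> wfw N -> (forall u, u \in nodes N -> f u = phi N t f u) ->
  forall u, u \in nodes N -> f u = F N t u.
Proof.
move=> ac hw Hf.
have It : forall k u, u \in nodes N -> iter k (phi N t) f u = f u.
  elim=> [|k IH] u uN //=.
  by rewrite (@phi_congr N t _ f) // -Hf.
move=> u uN; rewrite /F real_node_iter -(It #|` nodes N| u uN).
by apply: indep => // v /no_long; move=> /(_ ac uN).
Qed.

End Real.


Section WF.
Variable R : realType.
Variable D : nat.
Implicit Types N : GFNN R D.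
Lemma wf_ac N : wf_GFNN N -> acyclic N. Proof. by case. Qed.
Lemma wf_ins N : wf_GFNN N -> forall u, u \in ins N <-> (u \in nodes N /\ parentless N u).
Proof. by case=> _ []. Qed.
Lemma wf_outs N : wf_GFNN N -> forall u, u \in outs N -> u \in nodes N /\ u \notin ins N.
Proof. by case=> _ [_ []]. Qed.
Lemma wf_w N : wf_GFNN N -> wfw N.
Proof. by case=> _ [_ [_ []]]. Qed.
Lemma wf_b N : wf_GFNN N -> forall u, bias N u != 0 -> u \in nodes N /\ u \notin ins N.
Proof. by case=> _ [_ [_ [_ []]]]. Qed.
Lemma wf_lam N : wf_GFNN N -> forall r w, lam N r w != 0 -> w \in outs N.
Proof. by case=> _ [_ [_ [_ []]]]. Qed.
Lemma wf_ins_nodes N : wf_GFNN N -> forall u, u \in ins N -> u \in nodes N.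
Proof. by move=> /wf_ins H u /H []. Qed.
Lemma wf_lam0 N r w : wf_GFNN N -> w \notin outs N -> lam N r w = 0.
Proof. by move=> /wf_lam H wO; apply/eqP; apply: contraNT wO; apply: H. Qed.
Lemma wf_w0 N u v : wf_GFNN N -> (v \notin nodes N) || (u \notin nodes N) -> weight N u v = 0.
Proof.
move=> /wf_w H hv; apply/eqP; apply: contraTT hv => /H [-> ->] //.
Qed.
End WF.

Lemma sub_sum (R : realType) (X U : {fset nat}) (h : nat -> R) : X `<=` U ->
  \sum_(v <- U) (if v \in X then h v else 0) = \sum_(v <- X) h v.
Proof.
move=> XU; rewrite -(big_fset_incl _ XU); last by move=> x _ /negPf ->.
by rewrite big_seq [RHS]big_seq; apply: eq_bigr => v ->.
Qed.

Lemma aff_transfer (R : realType) (rho : R -> R) (I J : finType) zeta (aI bI gI : I -> R)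
  (aJ bJ gJ : J -> R) (f : I -> J) : bijective f ->
  (forall i, aJ (f i) = aI i) -> (forall i, bJ (f i) = bI i) -> (forall i, gJ (f i) = gI i) ->
  affine_symmetry rho zeta aI bI gI -> affine_symmetry rho zeta aJ bJ gJ.
Proof.
move=> fb ha hb hg [h0 hsum hind]; have [g fK gK] := fb; split.
- by rewrite -(bij_eq_card fb).
- move=> t; rewrite -(hsum t) (reindex f) /=; last by apply: onW_bij.
  by apply: eq_bigr => i _; rewrite ha hb hg.
- move=> Q Qp [cc [c0 [hnz heq]]].
  apply: (hind [set i | f i \in Q]).
    rewrite properT; apply/negP => /eqP E.
    move: Qp; rewrite properT => /negP; apply; apply/eqP/setP => j; rewrite inE.
    have : g j \in [set i | f i \in Q] by rewrite E inE.
    by rewrite inE gK => ->.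
  exists (fun i => cc (f i)), c0; split.
    case: hnz => [h|[j /andP [hj1 hj2]]]; [by left | right; exists (g j)].
    by rewrite inE gK hj1.
  move=> t; rewrite -[RHS](heq t); congr (_ + _).
  rewrite [RHS](reindex f) /=; last by apply: onW_bij.
  by apply: eq_big => i; rewrite ?inE // hb hg.
Qed.

Section Mod.
Variable R : realType.
Variable D : nat.
Variable rho : R -> R.
Variables N N' : GFNN R D.
Variables (A B P : {fset nat}) (n : nat) (c : 'I_n -> nat) (zeta : R) (alpha beta : nat -> R)
  (alpha' beta' gamma' : 'I_n -> R) (kappa nu : nat -> R).
Let inC x := [exists p, c p == x].
Let inW w := (w \in nodes N) && has (fun a => edgeb N a w) A.
Hypothesis wfN : wf_GFNN N.
Hypothesis wfN' : wf_GFNN N'.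
Hypothesis hA0 : A != fset0.
Hypothesis hAB : [disjoint A & B].
Hypothesis hABn : forall u, u \in A `|` B -> u \in nodes N /\ u \notin ins N.
Hypothesis hP : forall u v, u \in A `|` B -> edgeb N v u = (v \in P).
Hypothesis hn : (0 < n)%N.
Hypothesis hsym : affine_symmetry rho zeta
     (fun s : (A `|` B) + 'I_n => match s with inl u => alpha (val u) | inr p => alpha' p end)
     (fun s : (A `|` B) + 'I_n => match s with inl u => beta (val u) | inr p => beta' p end)
     (fun s : (A `|` B) + 'I_n => match s with inl u => bias N (val u) | inr p => gamma' p end).
Hypothesis hk : forall v, v \in P -> kappa v != 0.
Hypothesis hwb : forall u v, u \in A `|` B -> v \in P -> weight N u v = beta u * kappa v.
Hypothesis hW1 : forall w, inW w -> nu w != 0 /\ forall u, u \in A -> edgeb N u w.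
Hypothesis hW2 : forall w u, inW w -> u \in A -> weight N w u = nu w * alpha u.
Hypothesis hcinj : injective c.
Hypothesis hcnew : forall p, c p \notin nodes N `\` A.
Hypothesis hb' : forall p, beta' p != 0.
Hypothesis ha' : forall p w, inW w -> alpha' p != 0.
Hypothesis hBz : forall w u, inW w -> u \in B -> weight N w u = 0 -> alpha u != 0.
Hypothesis hins : ins N' = ins N.
Hypothesis hnodes : forall x, (x \in nodes N') = ((x \in nodes N) && (x \notin A)) || inC x.
Hypothesis hw1 : forall p v, weight N' (c p) v = if v \in P then beta' p * kappa v else 0.
Hypothesis hw2 : forall p u, ~~ inC u -> weight N' u (c p) = if inW u then - (alpha' p * nu u) else 0.
Hypothesis hw3 : forall u v, ~~ inC u -> ~~ inC v ->
       weight N' u v = if (u \in A) || (v \in A) then 0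
                       else if inW u && (v \in B) then weight N u v - alpha v * nu u
                       else weight N u v.
Hypothesis hb1 : forall p, bias N' (c p) = gamma' p.
Hypothesis hb2 : forall x, ~~ inC x -> bias N' x = if x \in A then 0
                                    else if inW x then bias N x + zeta * nu x
                                    else bias N x.
Hypothesis hout : ([disjoint A & outs N] /\ outs N' = outs N /\ lam0 N' = lam0 N /\ lam N' = lam N)
    \/
    exists mu : 'I_D -> R,
      (A `<=` outs N)%fset /\
      (forall r u, u \in A -> lam N r u = mu r * alpha u) /\
      (forall r, lam0 N' r = lam0 N r + zeta * mu r) /\
      (forall r p, lam N' r (c p) = - (alpha' p * mu r)) /\
      (forall r x, ~~ inC x -> lam N' r x = if x \in A then 0
                                         else if x \in B then lam N r x - alpha x * mu r
                                         else lam N r x) /\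
      (forall x, (x \in outs N') =
         [|| inC x, (x \in outs N) && (x \notin A `|` B)
           | (x \in B) && [exists r, lam N' r x != 0]]).

Lemma a0 : exists a, a \in A.
Proof. by apply/fset0Pn. Qed.

Lemma P_nodes v : v \in P -> v \in nodes N.
Proof.
have [a aA] := a0; move=> vP.
have := hP v (_ : a \in A `|` B); rewrite in_fsetU aA vP => /(_ isT).
by case/and3P.
Qed.

Lemma AnP a : a \in A -> a \notin P.
Proof.
move=> aA; apply/negP => aP.
have e : edgeb N a a by rewrite hP // in_fsetU aA.
have ac := wf_ac wfN; have := ac a [:: a]; rewrite /= e eqxx => /(_ isT isT).
by [].
Qed.

Lemma inW_nAB w : inW w -> w \notin A `|` B.
Proof.
case/andP => _ /hasP [a aA e]; apply/negP => wAB.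
by move: e; rewrite hP // => aP; move: (AnP aA); rewrite aP.
Qed.

Lemma inC_c p : inC (c p).
Proof. by apply/existsP; exists p. Qed.

Lemma inC_A x : inC x -> x \in nodes N -> x \in A.
Proof.
case/existsP => p /eqP <- xN; have := hcnew p; rewrite in_fsetD xN andbT.
by rewrite negbK.
Qed.

Lemma inC_nB x : inC x -> x \notin B.
Proof.
move=> xC; apply/negP => xB.
have xAB : x \in A `|` B by rewrite in_fsetU xB orbT.
have xA := inC_A xC (hABn xAB).1.
by move/fdisjointP: hAB => /(_ x xA); rewrite xB.
Qed.

Lemma inC_nP x : inC x -> x \notin P.
Proof. move=> xC; apply/negP => xP; by move: (AnP (inC_A xC (P_nodes xP))); rewrite xP. Qed.

Lemma inC_nins x : inC x -> x \notin ins N.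
Proof.
move=> xC; apply/negP => xi.
have xA := inC_A xC (wf_ins_nodes wfN xi).
by have := (hABn (_ : x \in A `|` B)).2; rewrite xi in_fsetU xA => /(_ isT).
Qed.

Lemma AB_disj x : x \in A -> x \in B -> False.
Proof. by move=> xA xB; move/fdisjointP: hAB => /(_ x xA); rewrite xB. Qed.

Lemma sumC (U : {fset nat}) (h : nat -> R) : (forall p, c p \in U) ->
  \sum_(v <- U) (if inC v then h v else 0) = \sum_(p < n) h (c p).
Proof.
move=> cU.
have E : forall v, (if inC v then h v else 0) = \sum_(p < n) (if c p == v then h v else 0).
  move=> v; case: ifP => [/existsP [q /eqP <-]|nC].
    rewrite (bigD1 q) //= eqxx big1 ?addr0 // => p pq.
    by case: eqP => // /hcinj pq'; move: pq; rewrite pq' eqxx.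
  rewrite big1 // => p _; case: eqP => // cv.
  by move: nC; rewrite /inC; move/negbT/existsPn => /(_ p); rewrite cv eqxx.
rewrite (eq_bigr _ (fun v _ => E v)) exchange_big /=; apply: eq_bigr => p _.
rewrite (big_fsetD1 (c p)) //= eqxx big1_fset ?addr0 // => v.
by rewrite in_fsetD1 => /andP [/negPf]; rewrite eq_sym => ->.
Qed.


Lemma mod_real : realization rho N = realization rho N'.
Proof.
apply: funext => t; apply: funext => r; rewrite /realization.
have acN := wf_ac wfN; have acN' := wf_ac wfN'.
have hwN := wf_w wfN; have hwN' := wf_w wfN'.
set Fn := real_node rho N t #|` nodes N|.
have FnE : Fn = F rho N t by [].
set Fn' := real_node rho N' t #|` nodes N'|.
have Fn'E : Fn' = F rho N' t by [].
set S := \sum_(v <- P) kappa v * Fn v.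
pose G x := if [pick p | c p == x] is Some p then rho (beta' p * S + gamma' p) else Fn x.
have GC p : G (c p) = rho (beta' p * S + gamma' p).
  rewrite /G; case: pickP => [q /eqP /hcinj -> //|/(_ p)]; by rewrite eqxx.
have GN x : ~~ inC x -> G x = Fn x.
  move=> xC; rewrite /G; case: pickP => // q hq; case/negP: xC; apply/existsP; by exists q.
have Psub : P `<=` nodes N by apply/fsubsetP => v; apply: P_nodes.
have FAB u : u \in A `|` B -> Fn u = rho (beta u * S + bias N u).
  move=> uAB; have [uN uNi] := hABn uAB.
  rewrite {1}FnE F_fix // /phi (negPf uNi) -FnE; congr rho; congr (_ + _).
  have -> : \sum_(v <- nodes N) weight N u v * Fn v = \sum_(v <- P) weight N u v * Fn v.
    symmetry; apply: big_fset_incl => // x xN xnP.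
    have : edgeb N x u = false by rewrite hP // (negPf xnP).
    by rewrite /edgeb xN uN /= => /negbFE/eqP ->; rewrite mul0r.
  rewrite /S mulr_sumr big_seq [RHS]big_seq; apply: eq_bigr => v vP.
  by rewrite hwb // mulrA.
have KEY : \sum_(u <- A) alpha u * Fn u + \sum_(u <- B) alpha u * Fn u
           + \sum_(p < n) alpha' p * G (c p) = zeta.
  case: hsym => _ /(_ S) hs _; rewrite big_sumType /= in hs.
  rewrite -hs; congr (_ + _); last by apply: eq_bigr => p _; rewrite GC.
  have -> : \sum_(i : A `|` B) alpha (val i) * rho (beta (val i) * S + bias N (val i))
      = \sum_(u <- A `|` B) alpha u * rho (beta u * S + bias N u) by rewrite big_seq_fsetE.
  have -> : \sum_(u <- A `|` B) alpha u * rho (beta u * S + bias N u)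
      = \sum_(u <- A `|` B) alpha u * Fn u.
    by rewrite big_seq [RHS]big_seq; apply: eq_bigr => u uAB; rewrite FAB.
  rewrite [RHS](big_fsetID _ (mem A)) /=; congr (_ + _); apply: eq_fbigl => x; rewrite !inE /=.
    by case xA: (x \in A) => /=; rewrite ?andbF.
  case xA: (x \in A) => /=; last by rewrite andbT.
  by apply/negP => xB; apply: (AB_disj xA xB).
have Psub' : P `<=` nodes N'.
  apply/fsubsetP => v vP; rewrite hnodes P_nodes //=.
  by case vA: (v \in A) => //; move: (AnP vA); rewrite vP.
have cU p : c p \in nodes N `|` nodes N' by rewrite in_fsetU hnodes inC_c !orbT.
have Gfix : forall x, x \in nodes N' -> G x = phi rho N' t G x.
  move=> x; rewrite hnodes => /orP [/andP[xN xnA] | xC].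
    have xnC : ~~ inC x by apply/negP => /inC_A /(_ xN); rewrite (negPf xnA).
    rewrite GN // {1}FnE F_fix // /phi hins -FnE; case: ifP => // xni; congr rho.
    set U := nodes N `|` nodes N'.
    rewrite (big_fset_incl _ (fsubsetUl (nodes N) (nodes N'))); last first.
      by move=> v _ vN; rewrite wf_w0 ?vN ?mul0r.
    rewrite [in RHS](big_fset_incl _ (fsubsetUr (nodes N) (nodes N'))); last first.
      by move=> v _ vN; rewrite (wf_w0 wfN') ?vN ?mul0r.
    have -> : \sum_(v <- U) weight N' x v * G v =
       \sum_(v <- U) (if inC v then weight N' x v * G v else 0) +
       \sum_(v <- U) (if inC v then 0 else weight N' x v * G v).
      by rewrite -big_split; apply: eq_bigr => v _ /=; case: ifP; rewrite ?addr0 ?add0r.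
    rewrite (sumC (fun v => weight N' x v * G v) cU).
    have -> : \sum_(v <- U) (if inC v then 0 else weight N' x v * G v) =
       \sum_(v <- U) weight N x v * Fn v
       - \sum_(v <- U) (if v \in A then weight N x v * Fn v else 0)
       - \sum_(v <- U) (if v \in B then (if inW x then alpha v * nu x * Fn v else 0) else 0).
      rewrite -!sumrB; apply: eq_bigr => v _.
      case vC: (inC v).
        case vA: (v \in A).
          have vnB : v \notin B by apply/negP => /(AB_disj vA).
          by rewrite (negPf vnB) subrr subr0.
        have vnN : v \notin nodes N by apply/negP => /(inC_A vC); rewrite vA.
        by rewrite (negPf (inC_nB vC)) wf_w0 ?vnN // mul0r subrr subr0.
      rewrite GN ?vC // hw3 ?vC ?xnC // (negPf xnA) /=.
      case vA: (v \in A).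
        have vnB : v \notin B by apply/negP => /(AB_disj vA).
        by rewrite (negPf vnB) subrr subr0 mul0r.
      rewrite subr0; case: (inW x); case: (v \in B) => /=; rewrite ?subr0 //; ring.
    have AU : A `<=` U by apply/fsubsetP => a aA; rewrite in_fsetU (hABn (_ : a \in A `|` B)).1 // in_fsetU aA.
    have BU : B `<=` U by apply/fsubsetP => a aB; rewrite in_fsetU (hABn (_ : a \in A `|` B)).1 // in_fsetU aB orbT.
    rewrite !sub_sum // hb2 // (negPf xnA).
    case xW: (inW x).
      rewrite -KEY.
      have -> : \sum_(v <- A) weight N x v * Fn v = nu x * \sum_(v <- A) alpha v * Fn v.
        by rewrite mulr_sumr big_seq [RHS]big_seq; apply: eq_bigr => v vA; rewrite hW2 // mulrA.
      have -> : \sum_(v <- B) alpha v * nu x * Fn v = nu x * \sum_(v <- B) alpha v * Fn v.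
        by rewrite mulr_sumr; apply: eq_bigr => v _; ring.
      have -> : \sum_(p < n) weight N' x (c p) * G (c p)
           = - nu x * \sum_(p < n) alpha' p * G (c p).
        by rewrite mulr_sumr; apply: eq_bigr => p _; rewrite hw2 // xW; ring.
      ring.
    have -> : \sum_(v <- A) weight N x v * Fn v = 0.
      rewrite big_seq big1 // => v vA.
      have : weight N x v == 0.
        apply: contraFT xW => nz; rewrite /inW xN /=; apply/hasP; exists v => //.
        by rewrite /edgeb nz xN (hABn (_ : v \in A `|` B)).1 // in_fsetU vA.
      by move/eqP ->; rewrite mul0r.
    have -> : \sum_(p < n) weight N' x (c p) * G (c p) = 0.
      by rewrite big1 // => p _; rewrite hw2 // xW mul0r.
    rewrite [X in _ - X]big1 //.
    by rewrite !subr0 add0r.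
  case/existsP: xC => p /eqP <-.
  rewrite GC /phi hins (negPf (inC_nins (inC_c p))) hb1; congr rho; congr (_ + _).
  have -> : \sum_(v <- nodes N') weight N' (c p) v * G v
      = \sum_(v <- nodes N') (if v \in P then beta' p * (kappa v * Fn v) else 0).
    apply: eq_bigr => v _; rewrite hw1; case: ifP => vP; last by rewrite mul0r.
    by rewrite GN ?mulrA //; apply/negP => /inC_nP; rewrite vP.
  by rewrite sub_sum // /S mulr_sumr.
have FG : forall x, x \in nodes N' -> Fn' x = G x.
  by move=> x xN; rewrite Fn'E -(F_unique acN' hwN' Gfix xN).
case: hout => [[hdis [ho [hl0 hl]]] | [mu [hAo [hlA [hl0 [hlc [hlx ho]]]]]]].
  rewrite ho hl0 hl; congr (_ + _); rewrite big_seq [RHS]big_seq; apply: eq_bigr => w wO.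
  have [wN _] := wf_outs wfN wO.
  have wnA : w \notin A by apply/negP => wA; move/fdisjointP: hdis => /(_ w wA); rewrite wO.
  have wnC : ~~ inC w by apply/negP => /inC_A /(_ wN); rewrite (negPf wnA).
  by rewrite FG ?GN // hnodes wN wnA.
set U := nodes N `|` nodes N'.
have oU : outs N `<=` U.
  by apply/fsubsetP => w wO; rewrite in_fsetU (wf_outs wfN wO).1.
have oU' : outs N' `<=` U.
  by apply/fsubsetP => w wO; rewrite in_fsetU (wf_outs wfN' wO).1 orbT.
have -> : \sum_(w <- outs N') lam N' r w * Fn' w = \sum_(w <- outs N') lam N' r w * G w.
  by rewrite big_seq [RHS]big_seq; apply: eq_bigr => w wO; rewrite FG // (wf_outs wfN' wO).1.
rewrite (big_fset_incl _ oU); last by move=> w _ wO; rewrite wf_lam0 ?mul0r.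
rewrite [in RHS](big_fset_incl _ oU'); last by move=> w _ wO; rewrite (wf_lam0 _ wfN') ?mul0r.
have -> : \sum_(v <- U) lam N' r v * G v =
   \sum_(v <- U) (if inC v then lam N' r v * G v else 0) +
   \sum_(v <- U) (if inC v then 0 else lam N' r v * G v).
  by rewrite -big_split; apply: eq_bigr => v _ /=; case: ifP; rewrite ?addr0 ?add0r.
rewrite (sumC (fun v => lam N' r v * G v) cU).
have -> : \sum_(v <- U) (if inC v then 0 else lam N' r v * G v) =
   \sum_(v <- U) lam N r v * Fn v
   - \sum_(v <- U) (if v \in A then lam N r v * Fn v else 0)
   - \sum_(v <- U) (if v \in B then alpha v * mu r * Fn v else 0).
  rewrite -!sumrB; apply: eq_bigr => v _.
  case vC: (inC v).
    case vA: (v \in A).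
      have vnB : v \notin B by apply/negP => /(AB_disj vA).
      by rewrite (negPf vnB) subrr subr0.
    have vnN : v \notin nodes N by apply/negP => /(inC_A vC); rewrite vA.
    have vnO : v \notin outs N by apply/negP => /(wf_outs wfN) []; rewrite (negPf vnN).
    by rewrite (negPf (inC_nB vC)) wf_lam0 // mul0r subrr subr0.
  rewrite GN ?vC // hlx ?vC //.
  case vA: (v \in A).
    have vnB : v \notin B by apply/negP => /(AB_disj vA).
    by rewrite (negPf vnB) subrr subr0 mul0r.
  by case: (v \in B); rewrite ?subr0 //; ring.
have AU : A `<=` U by apply/fsubsetP => a aA; rewrite in_fsetU (hABn (_ : a \in A `|` B)).1 // in_fsetU aA.
have BU : B `<=` U by apply/fsubsetP => a aB; rewrite in_fsetU (hABn (_ : a \in A `|` B)).1 // in_fsetU aB orbT.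
rewrite !sub_sum // hl0.
have -> : \sum_(v <- A) lam N r v * Fn v = mu r * \sum_(v <- A) alpha v * Fn v.
  by rewrite mulr_sumr big_seq [RHS]big_seq; apply: eq_bigr => v vA; rewrite hlA // mulrA.
have -> : \sum_(v <- B) alpha v * mu r * Fn v = mu r * \sum_(v <- B) alpha v * Fn v.
  by rewrite mulr_sumr; apply: eq_bigr => v _; ring.
have -> : \sum_(p < n) lam N' r (c p) * G (c p) = - mu r * \sum_(p < n) alpha' p * G (c p).
  by rewrite mulr_sumr; apply: eq_bigr => p _; rewrite hlc; ring.
rewrite -KEY; ring.
Qed.

Lemma mod_inv : irreducible rho N' -> non_degenerate N -> rho_modification rho N' N.
Proof.
move=> irrN' ndN; split => //; split => //.
have acN := wf_ac wfN; have hwN := wf_w wfN; have hwN' := wf_w wfN'.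
have Psub' : P `<=` nodes N'.
  apply/fsubsetP => v vP; rewrite hnodes P_nodes //=.
  by case vA: (v \in A) => //; move: (AnP vA); rewrite vP.
pose m := #|` A|.
have m0 : (0 < m)%N by rewrite cardfs_gt0.
pose q0 : 'I_m := Ordinal m0.
pose cA (q : 'I_m) := nth 0 (enum_fset A) q.
pose C := seq_fset tt (map c (enum 'I_n)).
have inCE x : (x \in C) = inC x.
  rewrite seq_fsetE; apply/mapP/existsP => [[p _ ->]|[p /eqP <-]]; first by exists p.
  by exists p; rewrite ?mem_enum.
have cAin q : cA q \in A by apply: mem_nth.
pose idx x : 'I_m := insubd q0 (index x (enum_fset A)).
have idxK x : x \in A -> cA (idx x) = x.
  move=> xA; rewrite /cA /idx insubdK ?nth_index //; by rewrite -topredE /= index_mem.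
have inAE x : [exists q, cA q == x] = (x \in A).
  apply/existsP/idP => [[q /eqP <-]//|xA]; by exists (idx x); rewrite idxK.
pose alphas x := if [pick p | c p == x] is Some p then alpha' p else alpha x.
pose betas x := if [pick p | c p == x] is Some p then beta' p else beta x.
have alC p : alphas (c p) = alpha' p.
  rewrite /alphas; case: pickP => [q /eqP /hcinj -> //|/(_ p)]; by rewrite eqxx.
have beC p : betas (c p) = beta' p.
  rewrite /betas; case: pickP => [q /eqP /hcinj -> //|/(_ p)]; by rewrite eqxx.
have alN x : ~~ inC x -> alphas x = alpha x.
  move=> xC; rewrite /alphas; case: pickP => // q hq; case/negP: xC; apply/existsP; by exists q.
have beN x : ~~ inC x -> betas x = beta x.
  move=> xC; rewrite /betas; case: pickP => // q hq; case/negP: xC; apply/existsP; by exists q.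
have nCnA x : x \in nodes N -> x \notin A -> ~~ inC x.
  by move=> xN xnA; apply/negP => /inC_A /(_ xN); rewrite (negPf xnA).
have Wf w : inW w -> [/\ w \in nodes N, w \notin A, w \in nodes N' & ~~ inC w].
  move=> wW; have wnAB := inW_nAB wW.
  have wN : w \in nodes N by case/andP: wW.
  have wnA : w \notin A by apply: contra wnAB; rewrite in_fsetU => ->.
  have wN' : w \in nodes N' by rewrite hnodes wN wnA.
  by split => //; apply: nCnA.
have eCW w p : inW w -> edgeb N' (c p) w.
  move=> wW; have [wN wnA wN' wnC] := Wf w wW.
  rewrite /edgeb hnodes inC_c orbT wN' hw2 ?nCnA // wW oppr_eq0 mulf_neq0 //.
    exact: (ha' _ wW).
  by case: (hW1 wW).
have inWE w : ((w \in nodes N') && has (fun a => edgeb N' a w) C) = inW w.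
  apply/idP/idP.
    case/andP => wN' /hasP [a]; rewrite inCE => /existsP [p /eqP <-] e.
    case/and3P: e => _ _; case wC: (inC w).
      by case/existsP: wC => q /eqP <-; rewrite hw1 (negPf (inC_nP (inC_c p))) eqxx.
    by rewrite hw2 ?wC //; case: (inW w); rewrite ?eqxx.
  move=> wW; have [wN wnA wN' wnC] := Wf w wW.
  rewrite wN' /=; apply/hasP; exists (c (Ordinal hn)); first by rewrite inCE inC_c.
  exact: eCW.
have BnA u : u \in B -> u \notin A by move=> uB; apply/negP => uA; apply: (AB_disj uA uB).
have BAB u : u \in B -> u \in A `|` B by move=> uB; rewrite in_fsetU uB orbT.
have BnC u : u \in B -> ~~ inC u by move=> uB; apply/negP => /inC_nB; rewrite uB.
have BnW u : u \in B -> inW u = false by move=> uB; apply/negP => /inW_nAB; rewrite BAB.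
exists C, B, P, m, cA, zeta, alphas, betas, (fun q => alpha (cA q)), (fun q => beta (cA q)),
  (fun q => bias N (cA q)), kappa, (fun w => - nu w).
cbv beta zeta.
refine (conj (conj _ (conj _ (conj _ _))) (conj (conj _ _) (conj (conj _ _) (conj (conj _ _) (conj (conj _ _) (conj (conj _ (conj _ _)) (conj (conj _ (conj _ (conj _ (conj _ (conj _ (conj _ _)))))) _))))))).
- by apply/fset0Pn; exists (c (Ordinal hn)); rewrite inCE inC_c.
- by apply/fdisjointP => x; rewrite inCE; exact: inC_nB.
- move=> u; rewrite in_fsetU inCE hins hnodes => /orP[uC|uB].
    by split; [rewrite uC orbT | exact: inC_nins].
  have [uN uni] := hABn (BAB _ uB); by rewrite uN BnA.
- move=> u v; rewrite in_fsetU inCE => /orP[/existsP [p /eqP <-]|uB].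
    rewrite /edgeb hw1; case vP: (v \in P); last by rewrite eqxx !andbF.
    by rewrite (fsubsetP Psub') // hnodes inC_c orbT /= mulf_neq0 // hk.
  have [uN uni] := hABn (BAB _ uB).
  case vC: (inC v).
    case/existsP: vC => p /eqP <-.
    by rewrite /edgeb hw2 ?BnC // BnW // eqxx /= !andbF (negPf (inC_nP (inC_c p))).
  rewrite /edgeb hw3 ?vC ?BnC // (negPf (BnA _ uB)) /=.
  case vA: (v \in A).
    by rewrite eqxx /= !andbF (negPf (AnP vA)).
  rewrite BnW // /= !hnodes vA vC (negPf (BnA _ uB)) uN /= andbT.
  by rewrite -(hP v (BAB _ uB)) /edgeb uN orbF.
- exact: m0.
- have cin0 : c (Ordinal hn) \in C `|` B by rewrite in_fsetU inCE inC_c.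
  pose j0 : C `|` B := [` cin0].
  pose f (s : (A `|` B) + 'I_n) : (C `|` B) + 'I_m :=
    match s with
    | inl u => if val u \in A then inr (idx (val u)) else inl (insubd j0 (val u))
    | inr p => inl (insubd j0 (c p)) end.
  have valj x : x \in C `|` B -> val (insubd j0 x) = x.
    by move=> h; rewrite insubdK.
  have uB (u : A `|` B) : val u \notin A -> val u \in B.
    by move=> h; have := fsvalP u; rewrite in_fsetU (negPf h).
  have CB1 u : u \in B -> u \in C `|` B by move=> h; rewrite in_fsetU h orbT.
  have CB2 p : c p \in C `|` B by rewrite in_fsetU inCE inC_c.
  have finj : injective f.
    move=> [u|p] [u'|p'] /=.
    - case: ifP => uA; case: ifP => u'A // [].
        by move/(f_equal cA); rewrite !idxK // => /val_inj ->.
      have h1 := CB1 _ (uB _ (negbT uA)); have h2 := CB1 _ (uB _ (negbT u'A)).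
      by move/(f_equal val); rewrite !valj // => /val_inj ->.
    - case: ifP => uA // [] /(f_equal val).
      have h1 := CB1 _ (uB _ (negbT uA)); rewrite !valj // => E.
      have : fsval u \in B := uB _ (negbT uA).
      by rewrite E => cB; move: (inC_nB (inC_c p')); rewrite cB.
    - case: ifP => u'A // [] /(f_equal val).
      have h1 := CB1 _ (uB _ (negbT u'A)); rewrite !valj // => E.
      have : fsval u' \in B := uB _ (negbT u'A).
      by rewrite -E => cB; move: (inC_nB (inC_c p)); rewrite cB.
    - by move=> [] /(f_equal val); rewrite !valj // => /hcinj ->.
  have fbij : bijective f.
    apply: inj_card_bij finj _.
    rewrite !card_sum !card_ord -!cardfE !cardfsU.
    have -> : A `&` B = fset0 by apply/eqP.
    have -> : C `&` B = fset0.
      apply/eqP/fset0Pn => [[x]]; rewrite in_fsetI inCE => /andP [/inC_nB xB]; by rewrite (negPf xB).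
    have uE : uniq (map c (enum 'I_n)) by rewrite map_inj_uniq // enum_uniq.
    rewrite /m size_seq_fset undup_id // size_map size_enum_ord.
    rewrite !cardfs0 !subn0; lia.
  apply: (aff_transfer fbij _ _ _ hsym) => [[u|p]|[u|p]|[u|p]] /=.
  + case: ifP => uA /=; first by rewrite idxK.
    by rewrite valj ?CB1 ?uB ?uA // alN // BnC // uB ?uA.
  + by rewrite valj // alC.
  + case: ifP => uA /=; first by rewrite idxK.
    by rewrite valj ?CB1 ?uB ?uA // beN // BnC // uB ?uA.
  + by rewrite valj // beC.
  + case: ifP => uA /=; first by rewrite idxK.
    have ub := uB _ (negbT uA).
    by rewrite valj ?CB1 // hb2 ?BnC // uA BnW.
  + by rewrite valj // hb1.
- exact: hk.
- move=> u v; rewrite in_fsetU inCE => /orP[/existsP [p /eqP <-]|uB] vP.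
    by rewrite hw1 vP beC.
  have vnC : ~~ inC v by apply/negP => /inC_nP; rewrite vP.
  have vnA : v \notin A by apply/negP => /AnP; rewrite vP.
  rewrite (hw3 (BnC _ uB) vnC) (negPf (BnA _ uB)) (negPf vnA) /= BnW //= hwb ?BAB //.
  by rewrite beN ?BnC.
- move=> w; rewrite inWE => wW; split; first by rewrite oppr_eq0; case: (hW1 wW).
  by move=> u; rewrite inCE => /existsP [p /eqP <-]; apply: eCW.
- move=> w u; rewrite inWE inCE => wW /existsP [p /eqP <-].
  have [_ _ _ wnC] := Wf w wW.
  by rewrite hw2 // wW alC; ring.
- move=> q q' /eqP; rewrite /cA nth_uniq ?fset_uniq // => /eqP; exact: val_inj.
- move=> q; rewrite in_fsetD inCE hnodes (cAin q) /= andbF /=.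
  by case: (inC _).
- move=> q; have aAB : cA q \in A `|` B by rewrite in_fsetU cAin.
  have [aN ani] := hABn aAB.
  have : ~~ parentless N (cA q).
    apply/negP => pl; move: ani; by rewrite ((wf_ins wfN (cA q)).2 (conj aN pl)).
  rewrite /parentless negbK => /hasP [v vN e].
  have vP : v \in P by rewrite -(hP _ aAB).
  move: e; rewrite /edgeb hwb // => /and3P [_ _ nz].
  by apply/eqP => b0; move: nz; rewrite b0 mul0r eqxx.
- move=> q w; rewrite inWE => wW.
  have := (hW1 wW).2 _ (cAin q); rewrite /edgeb hW2 // => /and3P [_ _ nz].
  by apply/eqP => a0'; move: nz; rewrite a0' mulr0 eqxx.
- move=> w u; rewrite inWE => wW uB.
  have [wN wnA _ wnC] := Wf w wW.
  rewrite (hw3 wnC (BnC _ uB)) (negPf wnA) (negPf (BnA _ uB)) /= wW uB /= alN ?BnC //.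
  move=> h; apply/eqP => a0'; move: h; rewrite a0' mul0r subr0 => h.
  by move: (hBz wW uB h); rewrite a0' eqxx.
- by rewrite hins.
- move=> x; rewrite inAE inCE hnodes.
  case xA: (x \in A).
    by rewrite orbT (hABn (_ : x \in A `|` B)).1 // in_fsetU xA.
  rewrite andbT orbF; case xC: (inC x) => /=; last by rewrite orbF andbT.
  by rewrite orbT andbF; apply/negP => /(inC_A xC); rewrite xA.
- move=> q v; have aAB : cA q \in A `|` B by rewrite in_fsetU cAin.
  have [aN _] := hABn aAB.
  case vP: (v \in P); first by rewrite hwb.
  case vN: (v \in nodes N); last by rewrite wf_w0 // vN.
  by move: (hP v aAB); rewrite vP /edgeb vN aN /= => /negbFE/eqP.
- move=> q u; rewrite inAE inWE => unA.
  case uW: (inW u); first by rewrite hW2 ?cAin //; ring.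
  apply/eqP; apply: contraFT uW => nz; have [uN aN] := hwN _ _ nz.
  rewrite /inW uN /=; apply/hasP; exists (cA q) => //.
  by rewrite /edgeb aN uN nz.
- move=> u v; rewrite !inAE !inCE inWE => unA vnA.
  case uC: (inC u) => /=.
    have unN : u \notin nodes N by apply/negP => /(inC_A uC); rewrite (negPf unA).
    by rewrite wf_w0 // unN orbT.
  case vC: (inC v) => /=.
    have vnN : v \notin nodes N by apply/negP => /(inC_A vC); rewrite (negPf vnA).
    by rewrite wf_w0 // vnN.
  rewrite (hw3 (negbT uC) (negbT vC)) (negPf unA) (negPf vnA) /=.
  case: (inW u && (v \in B)) => //.
  by rewrite alN ?vC //; ring.
- by [].
- move=> x; rewrite inAE inCE inWE => xnA.
  case xC: (inC x).
    have xnN : x \notin nodes N by apply/negP => /(inC_A xC); rewrite (negPf xnA).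
    by apply/eqP; apply: contraNT xnN => /(wf_b wfN) [].
  rewrite hb2 ?xC // (negPf xnA).
  by case: (inW x) => //; ring.
- case: hout => [[hdis [ho [hl0 hl]]] | [mu [hAo [hlA [hl0 [hlc [hlx ho]]]]]]].
    left; split.
      apply/fdisjointP => x; rewrite inCE ho => xC; apply/negP => xO.
      have xN := (wf_outs wfN xO).1.
      have xA := inC_A xC xN.
      by move/fdisjointP: hdis => /(_ x xA); rewrite xO.
    by rewrite ho hl0 hl.
  right; exists (fun r => - mu r); split.
    by apply/fsubsetP => x; rewrite inCE ho => ->.
  split.
    by move=> r u; rewrite inCE => /existsP [p /eqP <-]; rewrite hlc alC; ring.
  split; first by move=> r; rewrite hl0; ring.
  split; first by move=> r q; rewrite hlA ?cAin //; ring.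
  split.
    move=> r x; rewrite inAE inCE => xnA.
    case xC: (inC x).
      have xnN : x \notin nodes N by apply/negP => /(inC_A xC); rewrite (negPf xnA).
      have xnO : x \notin outs N by apply/negP => /(wf_outs wfN) []; rewrite (negPf xnN).
      by rewrite wf_lam0.
    rewrite hlx ?xC // (negPf xnA); case: (x \in B) => //.
    by rewrite alN ?xC //; ring.
  move=> x; rewrite inAE ho !in_fsetU inCE.
  case xA: (x \in A) => /=; first by rewrite (fsubsetP hAo).
  case xC: (inC x) => /=.
    rewrite (negPf (inC_nB xC)) /=.
    by apply/negP => /(wf_outs wfN) [] /(inC_A xC); rewrite xA.
  case xB: (x \in B) => /=; last by rewrite ?andbT ?orbF.
  rewrite !andbF /=; apply/idP/existsP => [xO|[r nz]]; first by apply: ndN.2.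
  exact: (wf_lam wfN nz).
Qed.

End Mod.


Section Final.
Variable R : realType.
Variable D : nat.
Variable rho : R -> R.
Variable Vin : {fset nat}.
Implicit Types N M K : GFNN R D.

Lemma rho_mod_real N N' : wf_GFNN N' -> rho_modification rho N N' ->
  realization rho N = realization rho N'.
Proof.
move=> wfN' [wfN [irrN [A [B [P [n [c [zeta [alpha [beta [alpha' [beta' [gamma' [kappa [nu H]]]]]]]]]]]]]]].
move: H; cbv zeta.
move=> [[hA0 [hAB [hABn hP]]] [[hn hsym] [[hk hwb] [[hW1 hW2] [[hcinj hcnew] [[hb' [ha' hBz]] [[hins [hnodes [hw1 [hw2 [hw3 [hb1 hb2]]]]]] hout]]]]]]].
by apply: (@mod_real R D rho N N' A B P n c zeta alpha beta alpha' beta' gamma' kappa nu).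
Qed.

Lemma rho_mod_inv N N' : regularG rho Vin N -> regularG rho Vin N' ->
  rho_modification rho N N' -> rho_modification rho N' N.
Proof.
move=> [_ _ _ ndN] [wfN' _ irrN' _].
move=> [wfN [irrN [A [B [P [n [c [zeta [alpha [beta [alpha' [beta' [gamma' [kappa [nu H]]]]]]]]]]]]]]].
move: H; cbv zeta.
move=> [[hA0 [hAB [hABn hP]]] [[hn hsym] [[hk hwb] [[hW1 hW2] [[hcinj hcnew] [[hb' [ha' hBz]] [[hins [hnodes [hw1 [hw2 [hw3 [hb1 hb2]]]]]] hout]]]]]]].
by apply: (@mod_inv R D rho N N' A B P n c zeta alpha beta alpha' beta' gamma' kappa nu).
Qed.

Lemma iso_reg N M : rho_iso rho Vin N M -> regularG rho Vin N /\ regularG rho Vin M.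
Proof. by elim=> [N0 r|N0 N1 M0 r _ _ [_ h]]; split. Qed.

Lemma iso_trans N M K : rho_iso rho Vin N M -> rho_iso rho Vin M K -> rho_iso rho Vin N K.
Proof.
elim=> [N0 r //|N0 N1 M0 r hm _ IH] H.
exact: (rho_iso_step r hm (IH H)).
Qed.

Lemma iso_snoc N M K : rho_iso rho Vin N M -> regularG rho Vin K ->
  rho_modification rho M K -> rho_iso rho Vin N K.
Proof.
move=> H rK hm; apply: (iso_trans H).
have [_ rM] := iso_reg H.
exact: (rho_iso_step rM hm (rho_iso_refl rK)).
Qed.

Lemma iso_sym N M : rho_iso rho Vin N M -> rho_iso rho Vin M N.
Proof.
elim=> [N0 r|N0 N1 M0 r hm H IH]; first exact: rho_iso_refl.
have [r1 _] := iso_reg H.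
exact: (iso_snoc IH r (rho_mod_inv r r1 hm)).
Qed.

Lemma iso_real N M : rho_iso rho Vin N M -> realization rho N = realization rho M.
Proof.
elim=> [//|N0 N1 M0 r hm H IH].
have [[wf1 _ _ _] _] := iso_reg H.
by rewrite (rho_mod_real wf1 hm).
Qed.

End Final.

Unset Implicit Arguments.

Theorem proposition5 (R : realType) (rho : R -> R) (Vin : {fset nat}) (D : nat) :
  nonlinearity rho -> Vin != fset0 ->
  [/\ equivalence_on (regularG rho Vin) (@rho_iso R D rho Vin),
      equivalence_on (regularL rho Vin) (@rho_iso R D rho Vin) &
      (forall N M : GFNN R D, rho_iso rho Vin N M ->
         realization rho N = realization rho M)].
Proof.
move=> _ _; split.
- split.
  + by move=> x rx; apply: rho_iso_refl.
  + by move=> x y _ _; apply: iso_sym.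
  + by move=> x y z _ _ _; apply: iso_trans.
- split.
  + by move=> x [rx _]; apply: rho_iso_refl.
  + by move=> x y _ _; apply: iso_sym.
  + by move=> x y z _ _ _; apply: iso_trans.
- by move=> N M; apply: iso_real.
Qed.
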